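(* The four identities (J1) $x\wedge y\approx y\wedge x$, (J2) $x\wedge(y\wedge z)\approx(x\wedge y)\wedge z$, (J4) $x''\approx x$, (J5) $x'\approx (x\wedge y)'\wedge(x\wedge y')'$ form a 4-base for the variety $\mathbb{BA}$ of Boolean algebras (in the language $\langle\wedge,{}'\rangle$). In particular, the idempotent law $x\wedge x\approx x$ follows from (J1), (J2), (J4), (J5).
   Context: Algebras are of type $\langle \wedge, {}'\rangle$ with $\wedge$ binary and ${}'$ unary. The variety $\mathbb{BA}$ of Boolean algebras in this language consists of the algebras $\langle B,\wedge,{}'\rangle$ obtained from Boolean algebras by keeping only meet and complement (equivalently, the variety generated by the two-element Boolean algebra $\mathbf 2$ with meet and complement). A base for a variety is an independent set of identities (no identity in the set follows from the others) that defines the variety; an $n$-base is a base with exactly $n$ identities. *)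

(* Defs.v *)
From Stdlib Require Import List.
Import ListNotations.

Inductive term : Type :=
  | Var : nat -> term
  | Meet : term -> term -> term
  | Comp : term -> term.

Record algebra : Type := Algebra {
  carrier :> Type;
  ameet : carrier -> carrier -> carrier;
  acomp : carrier -> carrier
}.

Fixpoint eval (A : algebra) (env : nat -> A) (t : term) : A :=
  match t with
  | Var n => env n
  | Meet s u => ameet A (eval A env s) (eval A env u)
  | Comp s => acomp A (eval A env s)
  end.

Definition identity : Type := (term * term)%type.

Definition satisfies (A : algebra) (e : identity) : Prop :=
  forall env : nat -> A, eval A env (fst e) = eval A env (snd e).

Definition satisfies_all (A : algebra) (S : list identity) : Prop :=
  forall e, In e S -> satisfies A e.

(* Semantic consequence (equivalent to derivability by Birkhoff's completeness). *)
Definition follows_from (S : list identity) (e : identity) : Prop :=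
  forall A : algebra, satisfies_all A S -> satisfies A e.

Definition two : algebra := Algebra bool andb negb.

(* Membership in the variety BA = V(2): satisfies every identity of 2. *)
Definition in_BA (A : algebra) : Prop :=
  forall e : identity, satisfies two e -> satisfies A e.

Definition defines_BA (S : list identity) : Prop :=
  forall A : algebra, satisfies_all A S <-> in_BA A.

Definition independent (S : list identity) : Prop :=
  forall i, i < length S ->
    ~ follows_from (firstn i S ++ skipn (Datatypes.S i) S) (nth i S (Var 0, Var 0)).

Definition is_base_BA (S : list identity) : Prop :=
  defines_BA S /\ independent S.

Notation x := (Var 0).
Notation y := (Var 1).
Notation z := (Var 2).

Definition J1 : identity := (Meet x y, Meet y x).
Definition J2 : identity := (Meet x (Meet y z), Meet (Meet x y) z).
Definition J4 : identity := (Comp (Comp x), x).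
Definition J5 : identity :=
  (Comp x, Meet (Comp (Meet x y)) (Comp (Meet x (Comp y)))).
Definition idem : identity := (Meet x x, x).

(* Main.v *)
Require Import Defs.
From Stdlib Require Import List Arith Lia.
Import ListNotations.

Record Ax (T : Type) (m : T -> T -> T) (c : T -> T) : Prop := {
  a1 : forall x y, m x y = m y x;
  a2 : forall x y z, m x (m y z) = m (m x y) z;
  a4 : forall x, c (c x) = x;
  a5 : forall x y, c x = m (c (m x y)) (c (m x (c y))) }.

Lemma lc {T : Type} {m : T -> T -> T} {c : T -> T} (H : Ax T m c) :
  forall x y z, m x (m y z) = m y (m x z).
Proof.
  intros x y z. rewrite (a2 _ _ _ H), (a2 _ _ _ H y), (a1 _ _ _ H x y). reflexivity.
Qed.
Lemma S1_42 {T : Type} {m : T -> T -> T} {c : T -> T} (H : Ax T m c) :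
  forall x0 x1 : T, (m (c (m x0 x1)) (c (m x1 (c x0)))) = (c x1).
Proof.
  intros.
  pose proof ((a1 _ _ _ H) x1 x0) as P0.
  pose proof ((a5 _ _ _ H) x1 x0) as P1.
  congruence.
Qed.

Lemma S1_43 {T : Type} {m : T -> T -> T} {c : T -> T} (H : Ax T m c) :
  forall x0 x1 : T, (m (c (m x0 x1)) (c (m (c x1) x0))) = (c x0).
Proof.
  intros.
  pose proof ((a1 _ _ _ H) x0 (c x1)) as P0.
  pose proof ((a5 _ _ _ H) x0 x1) as P1.
  congruence.
Qed.

Lemma S1_50 {T : Type} {m : T -> T -> T} {c : T -> T} (H : Ax T m c) :
  forall x0 x1 x2 : T, (m (c x0) x1) = (m (c (m x0 x2)) (m (c (m x0 (c x2))) x1)).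
Proof.
  intros.
  pose proof ((a5 _ _ _ H) x0 x2) as P0.
  pose proof ((a2 _ _ _ H) (c (m x0 x2)) (c (m x0 (c x2))) x1) as P1.
  congruence.
Qed.

Lemma S1_59 {T : Type} {m : T -> T -> T} {c : T -> T} (H : Ax T m c) :
  forall x0 x1 : T, (m (c (m x0 x1)) (c (m (c x0) x1))) = (c x1).
Proof.
  intros.
  pose proof ((a1 _ _ _ H) x1 (c x0)) as P0.
  pose proof ((S1_42 H) x0 x1) as P1.
  congruence.
Qed.

Lemma S1_82 {T : Type} {m : T -> T -> T} {c : T -> T} (H : Ax T m c) :
  forall x0 x1 x2 : T, (m x0 (c x1)) = (m (c (m x1 x2)) (m x0 (c (m (c x2) x1)))).
Proof.
  intros.
  pose proof ((S1_43 H) x1 x2) as P0.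
  pose proof ((lc H) x0 (c (m x1 x2)) (c (m (c x2) x1))) as P1.
  congruence.
Qed.

Lemma S1_1266 {T : Type} {m : T -> T -> T} {c : T -> T} (H : Ax T m c) :
  forall x0 x1 : T, (m x0 (c (m x1 x0))) = (m (c x1) (c (m (c x0) (c x1)))).
Proof.
  intros.
  pose proof ((S1_42 H) x1 (c x0)) as P0.
  pose proof ((S1_50 H) x1 (c (m (c x0) (c x1))) x0) as P1.
  pose proof ((a1 _ _ _ H) (c (m x1 x0)) (c (c x0))) as P2.
  pose proof ((a4 _ _ _ H) x0) as P3.
  congruence.
Qed.

Lemma S1_2143 {T : Type} {m : T -> T -> T} {c : T -> T} (H : Ax T m c) :
  forall x0 x1 : T, (m x0 (c (m (c x1) x0))) = (m x1 (c (m (c x0) x1))).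
Proof.
  intros.
  pose proof ((a4 _ _ _ H) x0) as P0.
  pose proof ((S1_1266 H) x1 (c x0)) as P1.
  pose proof ((a4 _ _ _ H) x0) as P2.
  congruence.
Qed.

Lemma S1_2935 {T : Type} {m : T -> T -> T} {c : T -> T} (H : Ax T m c) :
  forall x0 x1 : T, (m x0 (c x0)) = (m x1 (c x1)).
Proof.
  intros.
  pose proof ((S1_2143 H) x1 x0) as P0.
  pose proof ((S1_82 H) x1 x1 x0) as P1.
  pose proof ((lc H) (c (m x1 x0)) x0 (c (m (c x1) x0))) as P2.
  pose proof ((S1_59 H) x1 x0) as P3.
  congruence.
Qed.

Lemma Lzz {T : Type} {m : T -> T -> T} {c : T -> T} (H : Ax T m c) :
  forall a b : T, (m a (c a)) = (m b (c b)).
Proof.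
  intros.
  pose proof ((S1_2935 H) b a) as P0.
  congruence.
Qed.
Lemma S2_7 {T : Type} {m : T -> T -> T} {c : T -> T} (H : Ax T m c) (o i : T) (Hz : forall x, m x (c x) = o) (Hi : c o = i) :
  (c i) = o.
Proof.
  intros.
  pose proof (Hi ) as P0.
  pose proof ((a4 _ _ _ H) o) as P1.
  congruence.
Qed.

Lemma S2_9 {T : Type} {m : T -> T -> T} {c : T -> T} (H : Ax T m c) (o i : T) (Hz : forall x, m x (c x) = o) (Hi : c o = i) :
  (m o i) = o.
Proof.
  intros.
  pose proof (Hi ) as P0.
  pose proof (Hz o) as P1.
  congruence.
Qed.

Lemma S2_10 {T : Type} {m : T -> T -> T} {c : T -> T} (H : Ax T m c) (o i : T) (Hz : forall x, m x (c x) = o) (Hi : c o = i) :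
  forall x0 : T, (m (c x0) x0) = o.
Proof.
  intros.
  pose proof ((a4 _ _ _ H) x0) as P0.
  pose proof (Hz (c x0)) as P1.
  congruence.
Qed.

Lemma S2_11 {T : Type} {m : T -> T -> T} {c : T -> T} (H : Ax T m c) (o i : T) (Hz : forall x, m x (c x) = o) (Hi : c o = i) :
  (m i o) = o.
Proof.
  intros.
  pose proof ((S2_7 H o i Hz Hi) ) as P0.
  pose proof (Hz i) as P1.
  congruence.
Qed.

Lemma S2_23 {T : Type} {m : T -> T -> T} {c : T -> T} (H : Ax T m c) (o i : T) (Hz : forall x, m x (c x) = o) (Hi : c o = i) :
  forall x0 x1 : T, (m x0 o) = (m x1 (m x0 (c x1))).
Proof.
  intros.
  pose proof (Hz x1) as P0.
  pose proof ((lc H) x0 x1 (c x1)) as P1.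
  congruence.
Qed.

Lemma S2_25 {T : Type} {m : T -> T -> T} {c : T -> T} (H : Ax T m c) (o i : T) (Hz : forall x, m x (c x) = o) (Hi : c o = i) :
  forall x0 : T, (m x0 o) = (m o (m x0 i)).
Proof.
  intros.
  pose proof ((S2_9 H o i Hz Hi) ) as P0.
  pose proof ((lc H) x0 o i) as P1.
  congruence.
Qed.

Lemma S2_86 {T : Type} {m : T -> T -> T} {c : T -> T} (H : Ax T m c) (o i : T) (Hz : forall x, m x (c x) = o) (Hi : c o = i) :
  forall x0 x1 : T, (m x0 (m (c x0) x1)) = (m x1 o).
Proof.
  intros.
  pose proof ((a1 _ _ _ H) x1 (c x0)) as P0.
  pose proof ((S2_23 H o i Hz Hi) x1 x0) as P1.
  congruence.
Qed.

Lemma S2_97 {T : Type} {m : T -> T -> T} {c : T -> T} (H : Ax T m c) (o i : T) (Hz : forall x, m x (c x) = o) (Hi : c o = i) :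
  forall x0 x1 : T, (m x0 (m x1 (c (m x0 x1)))) = o.
Proof.
  intros.
  pose proof ((lc H) (c (m x0 x1)) x0 x1) as P0.
  pose proof ((S2_10 H o i Hz Hi) (m x0 x1)) as P1.
  pose proof ((a1 _ _ _ H) (c (m x0 x1)) x1) as P2.
  congruence.
Qed.

Lemma S2_248 {T : Type} {m : T -> T -> T} {c : T -> T} (H : Ax T m c) (o i : T) (Hz : forall x, m x (c x) = o) (Hi : c o = i) :
  forall x0 : T, (m o (m x0 (m i (c (m x0 o))))) = o.
Proof.
  intros.
  pose proof ((S2_25 H o i Hz Hi) x0) as P0.
  pose proof ((S2_97 H o i Hz Hi) o (m x0 i)) as P1.
  pose proof ((a2 _ _ _ H) x0 i (c (m x0 o))) as P2.
  congruence.
Qed.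

Lemma S2_463 {T : Type} {m : T -> T -> T} {c : T -> T} (H : Ax T m c) (o i : T) (Hz : forall x, m x (c x) = o) (Hi : c o = i) :
  forall x0 : T, (m i (c (m x0 x0))) = (c x0).
Proof.
  intros.
  pose proof (Hz x0) as P0.
  pose proof ((a5 _ _ _ H) x0 x0) as P1.
  pose proof ((a1 _ _ _ H) (c (m x0 x0)) (c o)) as P2.
  pose proof (Hi ) as P3.
  congruence.
Qed.

Lemma S2_486 {T : Type} {m : T -> T -> T} {c : T -> T} (H : Ax T m c) (o i : T) (Hz : forall x, m x (c x) = o) (Hi : c o = i) :
  (m o o) = o.
Proof.
  intros.
  pose proof ((S2_463 H o i Hz Hi) o) as P0.
  pose proof ((S2_248 H o i Hz Hi) o) as P1.
  pose proof ((S2_23 H o i Hz Hi) o o) as P2.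
  congruence.
Qed.

Lemma S2_503 {T : Type} {m : T -> T -> T} {c : T -> T} (H : Ax T m c) (o i : T) (Hz : forall x, m x (c x) = o) (Hi : c o = i) :
  (m i i) = i.
Proof.
  intros.
  pose proof ((S2_486 H o i Hz Hi) ) as P0.
  pose proof ((S2_463 H o i Hz Hi) o) as P1.
  pose proof (Hi ) as P2.
  pose proof (Hi ) as P3.
  congruence.
Qed.

Lemma S2_514 {T : Type} {m : T -> T -> T} {c : T -> T} (H : Ax T m c) (o i : T) (Hz : forall x, m x (c x) = o) (Hi : c o = i) :
  forall x0 : T, (m i x0) = (m i (m i x0)).
Proof.
  intros.
  pose proof ((S2_503 H o i Hz Hi) ) as P0.
  pose proof ((a2 _ _ _ H) i i x0) as P1.
  congruence.
Qed.

Lemma S2_649 {T : Type} {m : T -> T -> T} {c : T -> T} (H : Ax T m c) (o i : T) (Hz : forall x, m x (c x) = o) (Hi : c o = i) :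
  forall x0 : T, (m x0 o) = o.
Proof.
  intros.
  pose proof ((S2_463 H o i Hz Hi) x0) as P0.
  pose proof ((S2_23 H o i Hz Hi) i (m x0 x0)) as P1.
  pose proof ((a1 _ _ _ H) (m x0 x0) (c x0)) as P2.
  pose proof ((lc H) (c x0) x0 x0) as P3.
  pose proof ((S2_86 H o i Hz Hi) x0 x0) as P4.
  pose proof ((S2_11 H o i Hz Hi) ) as P5.
  congruence.
Qed.

Lemma S2_724 {T : Type} {m : T -> T -> T} {c : T -> T} (H : Ax T m c) (o i : T) (Hz : forall x, m x (c x) = o) (Hi : c o = i) :
  forall x0 : T, (m i (c x0)) = (c x0).
Proof.
  intros.
  pose proof ((S2_463 H o i Hz Hi) x0) as P0.
  pose proof ((S2_514 H o i Hz Hi) (c (m x0 x0))) as P1.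
  pose proof ((S2_463 H o i Hz Hi) x0) as P2.
  congruence.
Qed.

Lemma S2_747 {T : Type} {m : T -> T -> T} {c : T -> T} (H : Ax T m c) (o i : T) (Hz : forall x, m x (c x) = o) (Hi : c o = i) :
  forall x0 : T, (c (m x0 x0)) = (c x0).
Proof.
  intros.
  pose proof ((S2_724 H o i Hz Hi) (m x0 x0)) as P0.
  pose proof ((S2_463 H o i Hz Hi) x0) as P1.
  congruence.
Qed.

Lemma S2_749 {T : Type} {m : T -> T -> T} {c : T -> T} (H : Ax T m c) (o i : T) (Hz : forall x, m x (c x) = o) (Hi : c o = i) :
  forall x0 : T, (m i x0) = x0.
Proof.
  intros.
  pose proof ((a4 _ _ _ H) x0) as P0.
  pose proof ((S2_724 H o i Hz Hi) (c x0)) as P1.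
  pose proof ((a4 _ _ _ H) x0) as P2.
  congruence.
Qed.

Lemma S2_752 {T : Type} {m : T -> T -> T} {c : T -> T} (H : Ax T m c) (o i : T) (Hz : forall x, m x (c x) = o) (Hi : c o = i) :
  forall x0 : T, x0 = (m x0 i).
Proof.
  intros.
  pose proof ((S2_749 H o i Hz Hi) x0) as P0.
  pose proof ((a1 _ _ _ H) i x0) as P1.
  congruence.
Qed.

Lemma S2_853 {T : Type} {m : T -> T -> T} {c : T -> T} (H : Ax T m c) (o i : T) (Hz : forall x, m x (c x) = o) (Hi : c o = i) :
  forall x0 : T, x0 = (m x0 x0).
Proof.
  intros.
  pose proof ((S2_747 H o i Hz Hi) x0) as P0.
  pose proof ((a4 _ _ _ H) (m x0 x0)) as P1.
  pose proof ((a4 _ _ _ H) x0) as P2.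
  congruence.
Qed.

Lemma Lidem {T : Type} {m : T -> T -> T} {c : T -> T} (H : Ax T m c) (o i : T) (Hz : forall x, m x (c x) = o) (Hi : c o = i) :
  forall a : T, (m a a) = a.
Proof.
  intros.
  pose proof ((S2_853 H o i Hz Hi) a) as P0.
  congruence.
Qed.

Lemma Lannz {T : Type} {m : T -> T -> T} {c : T -> T} (H : Ax T m c) (o i : T) (Hz : forall x, m x (c x) = o) (Hi : c o = i) :
  forall a : T, (m a o) = o.
Proof.
  intros.
  pose proof ((S2_649 H o i Hz Hi) a) as P0.
  congruence.
Qed.

Lemma Lunit1 {T : Type} {m : T -> T -> T} {c : T -> T} (H : Ax T m c) (o i : T) (Hz : forall x, m x (c x) = o) (Hi : c o = i) :
  forall a : T, (m a i) = a.
Proof.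
  intros.
  pose proof ((S2_752 H o i Hz Hi) a) as P0.
  congruence.
Qed.


Lemma idem' {T m c} (H : Ax T m c) : forall a : T, m a a = a.
Proof. intro a. exact (Lidem H (m a (c a)) (c (m a (c a))) (fun x => Lzz H x a) eq_refl a). Qed.

Lemma absorp {T m c} (H : Ax T m c) : forall a b : T, m a (c (m (c a) b)) = a.
Proof.
  intros a b.
  pose proof (a5 _ _ _ H (c a) b) as E. rewrite (a4 _ _ _ H) in E.
  set (P := c (m (c a) b)) in *. set (Q := c (m (c a) (c b))) in *.
  pose proof (a2 _ _ _ H P Q P). pose proof (a1 _ _ _ H Q P).
  pose proof (a2 _ _ _ H P P Q). pose proof (idem' H P).
  congruence.
Qed.

Lemma Lm {T m c} (H : Ax T m c) : forall a b : T, m a (c (m a b)) = m a (c b).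
Proof.
  intros a b.
  pose proof (a5 _ _ _ H b a) as E.
  set (X := c (m a b)).
  pose proof (a1 _ _ _ H b a).
  assert (E2 : m b (c a) = m (c a) b) by apply (a1 _ _ _ H).
  rewrite E. rewrite H0, E2. fold X.
  set (Y := c (m (c a) b)).
  pose proof (absorp H a b) as Ab. fold Y in Ab.
  pose proof (a2 _ _ _ H a X Y). pose proof (a1 _ _ _ H a X).
  pose proof (a2 _ _ _ H X a Y).
  congruence.
Qed.

Lemma Lm2 {T m c} (H : Ax T m c) : forall v s s' : T,
  m v s = m v s' -> m v (c s) = m v (c s').
Proof.
  intros v s s' E. rewrite <- (Lm H v s), <- (Lm H v s'), E. reflexivity.
Qed.

Lemma distid {T m c} (H : Ax T m c) : forall v s u : T,
  m v (m s u) = m (m v s) (m v u).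
Proof.
  intros v s u.
  rewrite <- (a2 _ _ _ H v s (m v u)), (lc H s v u), (a2 _ _ _ H v v), (idem' H v).
  reflexivity.
Qed.

Lemma recover {T m c} (H : Ax T m c) : forall u w v : T,
  m u v = m w v -> m u (c v) = m w (c v) -> u = w.
Proof.
  intros u w v E1 E2.
  rewrite <- (a4 _ _ _ H u), <- (a4 _ _ _ H w), (a5 _ _ _ H u v), (a5 _ _ _ H w v), E1, E2.
  reflexivity.
Qed.

Definition Axa (A : algebra) := Ax A (ameet A) (acomp A).

Definition hb (A : algebra) (o : A) (b : bool) : A := if b then acomp A o else o.

Lemma hom (A : algebra) (H : Axa A) (a0 : A) :
  forall (b : nat -> bool) t,
  eval A (fun k => hb A (ameet A a0 (acomp A a0)) (b k)) t
  = hb A (ameet A a0 (acomp A a0)) (eval two b t).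
Proof.
  set (o := ameet A a0 (acomp A a0)).
  assert (Hz : forall x, ameet A x (acomp A x) = o) by (intro x; exact (Lzz H x a0)).
  pose proof (Lannz H o (acomp A o) Hz eq_refl) as An.
  pose proof (Lunit1 H o (acomp A o) Hz eq_refl) as U1.
  pose proof (idem' H) as Id.
  intros b t. induction t as [n|t1 IH1 t2 IH2|t1 IH1]; simpl.
  - reflexivity.
  - rewrite IH1, IH2. destruct (eval two b t1), (eval two b t2); simpl.
    all: first [ apply Id | apply Hz | apply An | apply U1 | rewrite (a1 _ _ _ H); apply Hz | symmetry; apply Hz | symmetry; apply An
               | symmetry; rewrite (a1 _ _ _ H); apply Hz | symmetry; rewrite (a1 _ _ _ H); apply An ].
  - rewrite IH1. destruct (eval two b t1); simpl.
    all: first [ reflexivity | apply (a4 _ _ _ H) | symmetry; apply (a4 _ _ _ H) ].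
Qed.

Definition upd {A : Type} (env : nat -> A) (n : nat) (v : A) : nat -> A :=
  fun k => if Nat.eqb k n then v else env k.

Lemma shannon (A : algebra) (H : Axa A) (o : A)
  (Hz : forall x, ameet A x (acomp A x) = o) :
  forall t env n,
  ameet A (env n) (eval A env t) = ameet A (env n) (eval A (upd env n (acomp A o)) t) /\
  ameet A (acomp A (env n)) (eval A env t) = ameet A (acomp A (env n)) (eval A (upd env n o) t).
Proof.
  pose proof (Lannz H o (acomp A o) Hz eq_refl) as An.
  pose proof (Lunit1 H o (acomp A o) Hz eq_refl) as U1.
  pose proof (idem' H) as Id.
  intros t env n. induction t as [k|t1 IH1 t2 IH2|t1 IH1]; simpl.
  - unfold upd. destruct (Nat.eqb k n) eqn:E.
    + apply PeanoNat.Nat.eqb_eq in E. subst k. split.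
      * rewrite Id, U1. reflexivity.
      * rewrite (a1 _ _ _ H), Hz, An. reflexivity.
    + split; reflexivity.
  - destruct IH1 as [A1 B1], IH2 as [A2 B2].
    rewrite !(distid H (env n)), !(distid H (acomp A (env n))), A1, A2, B1, B2. split; reflexivity.
  - destruct IH1 as [A1 B1]. split; apply (Lm2 H); assumption.
Qed.

Fixpoint mv (t : term) : nat :=
  match t with
  | Var n => n
  | Meet a b => Nat.max (mv a) (mv b)
  | Comp a => mv a
  end.

Lemma eval_ext (A : algebra) : forall t (env env' : nat -> A),
  (forall k, k <= mv t -> env k = env' k) -> eval A env t = eval A env' t.
Proof.
  induction t as [n|t1 IH1 t2 IH2|t1 IH1]; simpl; intros env env' E.
  - apply E. lia.
  - rewrite (IH1 env env'), (IH2 env env'); try reflexivity; intros; apply E; lia.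
  - rewrite (IH1 env env'); try reflexivity; intros; apply E; lia.
Qed.

Lemma claim (A : algebra) (H : Axa A) (a0 : A) (t s : term)
  (Hts : forall b, eval two b t = eval two b s) :
  forall n (b : nat -> bool) (env : nat -> A),
  (forall k, n <= k -> env k = hb A (ameet A a0 (acomp A a0)) (b k)) ->
  eval A env t = eval A env s.
Proof.
  set (o := ameet A a0 (acomp A a0)).
  assert (Hz : forall x, ameet A x (acomp A x) = o) by (intro x; exact (Lzz H x a0)).
  induction n as [|n IH]; intros b env Hb.
  - rewrite (eval_ext A t env (fun k => hb A o (b k))), (eval_ext A s env (fun k => hb A o (b k)))
      by (intros; apply Hb; lia).
    unfold o. rewrite !hom by exact H. rewrite Hts. reflexivity.
  - destruct (shannon A H o Hz t env n) as [T1 T2].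
    destruct (shannon A H o Hz s env n) as [S1 S2].
    apply (recover H _ _ (env n)).
    + rewrite (a1 _ _ _ H), T1, (a1 _ _ _ H (eval A env s)), S1.
      f_equal. apply (IH (fun k => if Nat.eqb k n then true else b k)).
      intros k Hk. unfold upd. destruct (Nat.eqb k n) eqn:E; [reflexivity|].
      apply PeanoNat.Nat.eqb_neq in E. apply Hb. lia.
    + rewrite (a1 _ _ _ H), T2, (a1 _ _ _ H (eval A env s)), S2.
      f_equal. apply (IH (fun k => if Nat.eqb k n then false else b k)).
      intros k Hk. unfold upd. destruct (Nat.eqb k n) eqn:E; [reflexivity|].
      apply PeanoNat.Nat.eqb_neq in E. apply Hb. lia.
Qed.

Lemma Ax_inBA (A : algebra) (H : Axa A) : in_BA A.
Proof.
  intros [t s] Hts env. simpl in *.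
  set (a0 := env 0).
  set (N := Nat.max (mv t) (mv s)).
  set (env' := fun k => if Nat.leb k N then env k
                        else hb A (ameet A a0 (acomp A a0)) true).
  rewrite (eval_ext A t env env'), (eval_ext A s env env').
  - apply (claim A H a0 t s Hts (S N) (fun _ => true)).
    intros k Hk. unfold env'. destruct (Nat.leb k N) eqn:E; [|reflexivity].
    apply PeanoNat.Nat.leb_le in E. lia.
  - intros k Hk. unfold env'. destruct (Nat.leb k N) eqn:E; [reflexivity|].
    apply PeanoNat.Nat.leb_gt in E. lia.
  - intros k Hk. unfold env'. destruct (Nat.leb k N) eqn:E; [reflexivity|].
    apply PeanoNat.Nat.leb_gt in E. lia.
Qed.

Definition env3 {A : Type} (a b d : A) : nat -> A :=
  fun n => match n with 0 => a | 1 => b | _ => d end.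

Lemma sat_Ax (A : algebra) : satisfies_all A [J1; J2; J4; J5] -> Axa A.
Proof.
  intro S. constructor.
  - intros a b. exact (S J1 ltac:(simpl; tauto) (env3 a b a)).
  - intros a b d. exact (S J2 ltac:(simpl; tauto) (env3 a b d)).
  - intros a. exact (S J4 ltac:(simpl; tauto) (env3 a a a)).
  - intros a b. exact (S J5 ltac:(simpl; tauto) (env3 a b a)).
Qed.

Lemma two_sat : satisfies_all two [J1; J2; J4; J5].
Proof.
  intros e He. simpl in He.
  destruct He as [<-|[<-|[<-|[<-|[]]]]]; intro env; simpl;
    destruct (env 0), (env 1), (env 2); reflexivity.
Qed.

Lemma defines : defines_BA [J1; J2; J4; J5].
Proof.
  intro A. split.
  - intro S. apply Ax_inBA. apply sat_Ax. exact S.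
  - intros HB e He. apply HB. apply two_sat. exact He.
Qed.

Definition M1 : algebra := Algebra bool (fun a _ => a) (fun a => a).
Definition M4 : algebra := Algebra bool andb (fun _ => false).
Definition M5 : algebra := Algebra bool andb (fun a => a).
Inductive t3 : Type := T0 | T1 | T2.
Definition m3 (a b : t3) : t3 :=
  match a, b with
  | T0, u => u | u, T0 => u
  | T1, T1 => T1 | T2, T2 => T2
  | _, _ => T0
  end.
Definition c3 (a : t3) : t3 := match a with T0 => T0 | T1 => T2 | T2 => T1 end.
Definition M2 : algebra := Algebra t3 m3 c3.

Lemma indep : independent [J1; J2; J4; J5].
Proof.
  intros i Hi. simpl in Hi.
  destruct i as [|[|[|[|i]]]]; [ | | | | lia]; simpl; intro F.
  - specialize (F M1). 
    assert (HS : satisfies_all M1 [J2; J4; J5]).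
    { intros e He; simpl in He; destruct He as [<-|[<-|[<-|[]]]]; intro env; simpl;
      destruct (env 0), (env 1), (env 2); reflexivity. }
    specialize (F HS (env3 true false true)). simpl in F. discriminate.
  - specialize (F M2).
    assert (HS : satisfies_all M2 [J1; J4; J5]).
    { intros e He; simpl in He; destruct He as [<-|[<-|[<-|[]]]]; intro env; simpl;
      destruct (env 0), (env 1), (env 2); reflexivity. }
    specialize (F HS (env3 T1 T1 T2)). simpl in F. discriminate.
  - specialize (F M4).
    assert (HS : satisfies_all M4 [J1; J2; J5]).
    { intros e He; simpl in He; destruct He as [<-|[<-|[<-|[]]]]; intro env; simpl;
      destruct (env 0), (env 1), (env 2); reflexivity. }
    specialize (F HS (env3 true true true)). simpl in F. discriminate.
  - specialize (F M5).
    assert (HS : satisfies_all M5 [J1; J2; J4]).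
    { intros e He; simpl in He; destruct He as [<-|[<-|[<-|[]]]]; intro env; simpl;
      destruct (env 0), (env 1), (env 2); reflexivity. }
    specialize (F HS (env3 true false true)). simpl in F. discriminate.
Qed.

Theorem theorem2p2 :
  is_base_BA [J1; J2; J4; J5] /\ length [J1; J2; J4; J5] = 4 /\
  follows_from [J1; J2; J4; J5] idem.
Proof.
  split; [split; [exact defines | exact indep] | split; [reflexivity|]].
  intros A S. apply (proj1 (defines A) S). intro env. simpl. destruct (env 0); reflexivity.
Qed.
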